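(* Let $(W,\unlhd,\prec)$ be an intuitionistic modal Kripke frame, and let $\lhd$ denote the strict part of $\unlhd$ (i.e. $\unlhd$ minus the identity). The following are equivalent: (i) $\prec\,=\,\lhd$ and the Alexandroff topology on $W$ whose open sets are the $\unlhd$-upward closed sets is scattered; (ii) $(W,\unlhd,\prec)$ is a frame for $\mathsf{KM}$ (every theorem of $\mathsf{KM}$ is valid in it); (iii) $\prec\,=\,\lhd$ and there is no infinite strictly ascending $\lhd$-chain $w_0\lhd w_1\lhd w_2\lhd\cdots$ in $W$.
   Context: An intuitionistic modal Kripke frame is a triple $(W,\unlhd,\prec)$ with $\unlhd$ a partial order on $W$ and $\prec$ a binary relation such that $w\unlhd v$ and $v\prec x$ imply $w\prec x$. Formulas are built from propositional variables, $\bot,\to,\wedge,\vee,\Box$. A valuation assigns to each variable a $\unlhd$-upward closed subset of $W$; connectives are interpreted as in the Heyting algebra of upsets, and $\Box A$ denotes $\{w\mid \forall x(w\prec x\Rightarrow x\in A)\}$. A formula is valid in the frame if it denotes $W$ under every valuation. $\mathsf{KM}$ is the smallest set of formulas containing all axioms of intuitionistic propositional logic, $\Box(A\to B)\to(\Box A\to\Box B)$, $(\Box A\to A)\to A$ and $\Box A\to((B\to A)\vee B)$, and closed under modus ponens, necessitation ($A/\Box A$) and substitution. A topological space is scattered if every nonempty subset has an isolated point. *)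

(* Defs.v *)
Definition im_frame (W : Type) (le prec : W -> W -> Prop) : Prop :=
  (forall w, le w w) /\
  (forall w v u, le w v -> le v u -> le w u) /\
  (forall w v, le w v -> le v w -> w = v) /\
  (forall w v x, le w v -> prec v x -> prec w x).

Definition strict_part {W : Type} (le : W -> W -> Prop) (w v : W) : Prop :=
  le w v /\ w <> v.

Definition upset {W : Type} (le : W -> W -> Prop) (U : W -> Prop) : Prop :=
  forall w v, le w v -> U w -> U v.

Inductive form : Type :=
| Var : nat -> form
| Bot : form
| Imp : form -> form -> form
| And : form -> form -> form
| Or  : form -> form -> form
| Box : form -> form.

Fixpoint subst (s : nat -> form) (A : form) : form :=
  match A with
  | Var p => s p
  | Bot => Bot
  | Imp A B => Imp (subst s A) (subst s B)
  | And A B => And (subst s A) (subst s B)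
  | Or A B => Or (subst s A) (subst s B)
  | Box A => Box (subst s A)
  end.

Fixpoint denote {W : Type} (le prec : W -> W -> Prop) (V : nat -> W -> Prop)
  (A : form) : W -> Prop :=
  match A with
  | Var p => V p
  | Bot => fun _ => False
  | Imp A B => fun w => forall v, le w v ->
                 denote le prec V A v -> denote le prec V B v
  | And A B => fun w => denote le prec V A w /\ denote le prec V B w
  | Or A B => fun w => denote le prec V A w \/ denote le prec V B w
  | Box A => fun w => forall x, prec w x -> denote le prec V A x
  end.

Definition valid_in {W : Type} (le prec : W -> W -> Prop) (A : form) : Prop :=
  forall V : nat -> W -> Prop, (forall p, upset le (V p)) ->
    forall w, denote le prec V A w.

Inductive ipc_axiom : form -> Prop :=
| ax_K  A B   : ipc_axiom (Imp A (Imp B A))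
| ax_S  A B C : ipc_axiom (Imp (Imp A (Imp B C)) (Imp (Imp A B) (Imp A C)))
| ax_A1 A B   : ipc_axiom (Imp (And A B) A)
| ax_A2 A B   : ipc_axiom (Imp (And A B) B)
| ax_AI A B   : ipc_axiom (Imp A (Imp B (And A B)))
| ax_O1 A B   : ipc_axiom (Imp A (Or A B))
| ax_O2 A B   : ipc_axiom (Imp B (Or A B))
| ax_OE A B C : ipc_axiom (Imp (Imp A C) (Imp (Imp B C) (Imp (Or A B) C)))
| ax_EFQ A    : ipc_axiom (Imp Bot A).

Inductive KM : form -> Prop :=
| KM_ipc A : ipc_axiom A -> KM A
| KM_k A B : KM (Imp (Box (Imp A B)) (Imp (Box A) (Box B)))
| KM_lob A : KM (Imp (Imp (Box A) A) A)
| KM_km A B : KM (Imp (Box A) (Or (Imp B A) B))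
| KM_mp A B : KM (Imp A B) -> KM A -> KM B
| KM_nec A : KM A -> KM (Box A)
| KM_subst (s : nat -> form) A : KM A -> KM (subst s A).

Definition KM_frame {W : Type} (le prec : W -> W -> Prop) : Prop :=
  forall A, KM A -> valid_in le prec A.

Definition alexandroff_open {W : Type} (le : W -> W -> Prop) (U : W -> Prop) : Prop :=
  upset le U.

Definition isolated_point {W : Type} (is_open : (W -> Prop) -> Prop)
  (S : W -> Prop) (x : W) : Prop :=
  S x /\ exists U, is_open U /\ U x /\ (forall y, U y -> S y -> y = x).

Definition scattered {W : Type} (is_open : (W -> Prop) -> Prop) : Prop :=
  forall S : W -> Prop, (exists x, S x) -> exists x, isolated_point is_open S x.

Definition same_rel {W : Type} (R1 R2 : W -> W -> Prop) : Prop :=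
  forall w v, R1 w v <-> R2 w v.

(* Main.v *)
Require Import Defs.
From Stdlib Require Import Classical ClassicalEpsilon.

Lemma persist W le prec (H : im_frame W le prec) V (HV : forall p, upset le (V p)) A :
  upset le (denote le prec V A).
Proof.
  destruct H as [Hr [Ht [Ha Hf]]].
  induction A; simpl; intros w v Hwv Hw.
  - exact (HV n w v Hwv Hw).
  - exact Hw.
  - intros u Hvu HA. apply Hw; eauto.
  - destruct Hw; split; eauto.
  - destruct Hw; [left|right]; eauto.
  - intros x Hx. apply Hw. eauto.
Qed.

Lemma subst_denote W le prec V s A : forall w : W,
  denote le prec V (subst s A) w <-> denote le prec (fun p => denote le prec V (s p)) A w.
Proof.
  induction A; simpl; intros w.
  - tauto.
  - tauto.
  - split; intros H v Hv HA; apply IHA2; apply H; auto; apply IHA1; auto.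
  - rewrite IHA1, IHA2; tauto.
  - rewrite IHA1, IHA2; tauto.
  - split; intros H x Hx; apply IHA; auto.
Qed.

Lemma sound W le prec (Hfr : im_frame W le prec)
  (Heq : same_rel prec (strict_part le))
  (Hind : forall P : W -> Prop,
     (forall x, (forall y, strict_part le x y -> P y) -> P x) -> forall x, P x) :
  forall A, KM A -> valid_in le prec A.
Proof.
  pose proof Hfr as Hfr'. destruct Hfr' as [Hr [Ht [Ha Hf]]].
  intros A HA; induction HA; unfold valid_in; intros V HV w;
    pose proof (persist _ _ _ Hfr V HV) as Hp.
  - destruct H; simpl.
    + intros v _ HA u Hvu _. exact (Hp _ v u Hvu HA).
    + intros v _ H1 u Hvu H2 t Hut HAt.
      assert (le v t) by eauto.
      apply (H1 t H HAt t (Hr t)). apply H2; auto.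
    + intros v _ [a b]; exact a.
    + intros v _ [a b]; exact b.
    + intros v _ a u Hvu b; split; [exact (Hp _ v u Hvu a) | exact b].
    + intros v _ a; left; exact a.
    + intros v _ a; right; exact a.
    + intros v _ H1 u Hvu H2 t Hut [a|b].
      * apply H1; eauto.
      * apply H2; auto.
    + intros v _ [].
  - simpl. intros v _ H1 u Hvu H2 x Hux.
    apply (H1 x (Hf _ _ _ Hvu Hux) x (Hr x)). apply H2; auto.
  - simpl. intros v _ H1.
    apply (Hind (fun v => denote le prec V (Imp (Box A) A) v -> denote le prec V A v));
      [|exact H1].
    clear v H1. intros x IH H1. simpl in H1.
    apply H1; [apply Hr|].
    intros y Hxy. apply Heq in Hxy. apply IH; auto. simpl.
    intros u Hyu HB. apply H1; eauto. destruct Hxy; eauto.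
  - simpl. intros v _ HB.
    destruct (classic (denote le prec V B v)) as [b|nb]; [right; exact b | left].
    intros u Hvu Bu. apply HB. apply Heq. split; auto.
    intro e; subst; contradiction.
  - exact (IHHA1 V HV w w (Hr w) (IHHA2 V HV w)).
  - simpl. intros x _; apply IHHA; auto.
  - apply (proj2 (subst_denote _ _ _ _ _ _ _)). apply IHHA.
    intros p; apply persist; auto.
Qed.

Lemma lob_sem W le prec (Hfr : im_frame W le prec) (HK : KM_frame le prec)
  (p : W -> Prop) (Hp : upset le p) (w : W) :
  (forall v, le w v -> (forall x, prec v x -> p x) -> p v) -> p w.
Proof.
  intros Hc. destruct Hfr as [Hr _].
  exact (HK _ (KM_lob (Var 0)) (fun _ => p) (fun _ => Hp) w w (Hr w) Hc).
Qed.

Lemma prec_strict W le prec (Hfr : im_frame W le prec) (HK : KM_frame le prec) w x :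
  prec w x -> strict_part le w x.
Proof.
  intros Hwx. pose proof Hfr as Hfr'. destruct Hfr' as [Hr [Ht [Ha Hf]]].
  assert (key : (forall v, le w v -> le v x -> v = w) -> False).
  { intros Hv.
    assert (Hup : upset le (fun u => ~ (le u w \/ le u x))).
    { intros a b Hab Hna [h|h]; apply Hna; [left|right]; eauto. }
    assert (Hpw := lob_sem W le prec Hfr HK _ Hup w).
    apply Hpw; [|left; apply Hr].
    intros v Hwv Hbox.
    destruct (classic (le v w \/ le v x)) as [h|h]; [|exact h].
    exfalso. assert (v = w) by (destruct h; auto). subst v.
    apply (Hbox x Hwx). right; apply Hr. }
  split.
  - destruct (classic (le w x)) as [h|h]; auto.
    exfalso; apply key; intros v h1 h2; exfalso; eauto.
  - intro e; subst; apply key; intros; apply Ha; auto.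
Qed.

Lemma prec_max W le prec (Hfr : im_frame W le prec) (HK : KM_frame le prec)
  (X : W -> Prop) : (exists s, X s) -> exists v, X v /\ forall y, prec v y -> ~ X y.
Proof.
  intros [s0 Hs0]. pose proof Hfr as Hfr'. destruct Hfr' as [Hr [Ht [Ha Hf]]].
  apply NNPP; intro Hn.
  assert (Hup : upset le (fun u => ~ exists s, X s /\ le u s)).
  { intros a b Hab Hna [s [Xs Hbs]]. apply Hna. exists s; split; eauto. }
  assert (H0 := lob_sem W le prec Hfr HK _ Hup s0).
  apply H0; [|exists s0; split; auto].
  intros v Hv Hbox.
  intros [s [Xs Hvs]].
  apply Hn. exists s. split; auto. intros y Hsy Xy.
  apply (Hbox y (Hf _ _ _ Hvs Hsy)). exists y; split; auto.
Qed.

Lemma strict_prec W le prec (Hfr : im_frame W le prec) (HK : KM_frame le prec) w x :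
  strict_part le w x -> prec w x.
Proof.
  intros [Hwx Hne]. pose proof Hfr as Hfr'. destruct Hfr' as [Hr [Ht [Ha Hf]]].
  apply NNPP; intro Hn.
  destruct (prec_max W le prec Hfr HK (fun v => le w v /\ le v x /\ v <> x))
    as [v [[Hwv [Hvx Hvne]] Hmax]].
  { exists w; auto. }
  assert (Hbox : forall y, prec v y -> ~ le y x).
  { intros y Hvy Hyx. destruct (classic (y = x)) as [e|e].
    - subst y. apply Hn. eauto.
    - apply (Hmax y Hvy). destruct (prec_strict W le prec Hfr HK v y Hvy).
      repeat split; eauto. }
  assert (Hupq : upset le (fun u => le x u)) by (intros a b h1 h2; eauto).
  assert (Hupp : upset le (fun u => ~ le u x)) by (intros a b h1 h2 h3; eauto).
  pose (V := fun n => match n with 0 => (fun u => ~ le u x) | _ => (fun u => le x u) end).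
  assert (HV : forall n, upset le (V n)) by (intros [|n]; simpl; auto).
  pose proof (HK _ (KM_km (Var 0) (Var 1)) V HV v v (Hr v) Hbox) as Hk.
  simpl in Hk. destruct Hk as [Hk|Hk].
  - exact (Hk x Hvx (Hr x) (Hr x)).
  - apply Hvne; apply Ha; auto.
Qed.

Lemma ind_sc W le (Hfr : forall a b c : W, le a b -> le b c -> le a c)
  (Sc : scattered (alexandroff_open le)) :
  forall P : W -> Prop,
     (forall x, (forall y, strict_part le x y -> P y) -> P x) -> forall x, P x.
Proof.
  intros P HP x. apply NNPP; intro Hx.
  destruct (Sc (fun x => ~ P x) (ex_intro _ x Hx)) as [z [Hz [U [HU [Uz HUS]]]]].
  apply Hz. apply HP. intros y [Hzy Hne].
  apply NNPP; intro Hy. apply Hne. symmetry. apply HUS; auto. exact (HU z y Hzy Uz).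
Qed.

Theorem corollary4p10 (W : Type) (le prec : W -> W -> Prop) :
  im_frame W le prec ->
  ((same_rel prec (strict_part le) /\ scattered (alexandroff_open le))
     <-> KM_frame le prec) /\
  (KM_frame le prec <->
     (same_rel prec (strict_part le) /\
      ~ exists f : nat -> W, forall n, strict_part le (f n) (f (S n)))).
Proof.
  intros Hfr. pose proof Hfr as Hfr'. destruct Hfr' as [Hr [Ht [Ha Hf]]].
  assert (A1 : KM_frame le prec -> same_rel prec (strict_part le)).
  { intros HK w x; split; [apply prec_strict|apply strict_prec]; auto. }
  assert (A2 : KM_frame le prec -> scattered (alexandroff_open le)).
  { intros HK X HX. destruct (prec_max W le prec Hfr HK X HX) as [v [Xv Hm]].
    exists v. split; auto. exists (le v). split; [intros a b h1 h2; eauto|].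
    split; [apply Hr|]. intros y Hvy Xy.
    apply NNPP; intro Hne. apply (Hm y); auto. apply (A1 HK). split; auto. }
  assert (C : same_rel prec (strict_part le) -> scattered (alexandroff_open le) ->
              KM_frame le prec).
  { intros Heq Sc A HA. apply sound; auto. apply ind_sc; auto. }
  assert (D : scattered (alexandroff_open le) ->
              ~ exists f : nat -> W, forall n, strict_part le (f n) (f (S n))).
  { intros Sc [f Hf0].
    destruct (Sc (fun u => exists n, u = f n) (ex_intro _ (f 0) (ex_intro _ 0 eq_refl)))
      as [z [[n Hn] [U [HU [Uz HUS]]]]]. subst z.
    destruct (Hf0 n) as [h1 h2]. apply h2. symmetry.
    apply HUS; [exact (HU _ _ h1 Uz)| exists (S n); reflexivity]. }
  assert (E : (~ exists f : nat -> W, forall n, strict_part le (f n) (f (S n))) ->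
              scattered (alexandroff_open le)).
  { intros NC X [s0 Hs0]. apply NNPP; intro Hn.
    assert (Hsucc : forall x, X x -> exists y, X y /\ strict_part le x y).
    { intros x Xx. apply NNPP; intro Hno. apply Hn. exists x. split; auto.
      exists (le x). split; [intros a b h1 h2; eauto|]. split; [apply Hr|].
      intros y Hxy Xy. apply NNPP; intro Hne. apply Hno. exists y. split; auto. split; auto. }
    assert (Hstep : forall t : {x | X x},
               {t' : {x | X x} | strict_part le (proj1_sig t) (proj1_sig t')}).
    { intros [x Xx]. apply constructive_indefinite_description.
      destruct (Hsucc x Xx) as [y [Xy Hxy]]. exists (exist _ y Xy). exact Hxy. }
    pose (g := nat_rect (fun _ => {x | X x}) (exist _ s0 Hs0)
                 (fun _ t => proj1_sig (Hstep t))).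
    apply NC. exists (fun n => proj1_sig (g n)). intro n. simpl.
    exact (proj2_sig (Hstep (g n))). }
  split; split.
  - intros [Heq Sc]; auto.
  - intros HK; split; auto.
  - intros HK; split; auto.
  - intros [Heq NC]; auto.
Qed.
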